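(* Consider an RBM with observed variables $X\in\{-1,1\}^n$ as in the context, with parameter $s$. Fix an observed variable $u$ and subsets $I,S\subseteq[n]$ such that $\{u\},I,S$ are pairwise disjoint, $I$ is nonempty, and $I$ is a subset of the MRF neighborhood of $u$. Fix any assignments $x_u\in\{-1,1\}$, $x_I\in\{-1,1\}^{|I|}$, $x_S\in\{-1,1\}^{|S|}$. Then there exists a subset $I'\subseteq I$ with $|I'|\le2^s$ such that \[\nu_{u,I'|S}(x_u,x_{I'}|x_S)\ge\frac{1}{4^{2^s}}\left(\frac{1}{|I|}\right)^{2^s(2^s+1)}\nu_{u,I|S}(x_u,x_I|x_S),\] where $x_{I'}$ is the restriction of $x_I$ to $I'$.
   Context: RBM: $\mathbb{P}(X=x,Y=y)\propto\exp(x^TJy+h^Tx+g^Ty)$ over observed $X\in\{-1,1\}^n$, latent $Y\in\{-1,1\}^m$, $J\in\mathbb{R}^{n\times m}$, $h\in\mathbb{R}^n$, $g\in\mathbb{R}^m$. The marginal of $X$ is $\propto\exp(f(x))$, $f(x)=\sum_j\rho(J_j\cdot x+g_j)+h^Tx$, $\rho(t)=\log(e^t+e^{-t})$, $J_j$ the $j$-th column; $f=\sum_{T\subseteq[n]}\hat f(T)\chi_T$, $\chi_T(x)=\prod_{i\in T}x_i$. MRF neighborhood of $u$: all $i\ne u$ with $\hat f(T)\ne0$ for some $T\ni u,i$. $s$: maximum over $u$ of the number of latent $j$ with $J_{i,j}\ne0$ for some $i$ in the MRF neighborhood of $u$. For disjoint $\{u\},I,S$: $\nu_{u,I|S}(x_u,x_I|x_S):=|\mathbb{P}(X_u=x_u,X_I=x_I|X_S=x_S)-\mathbb{P}(X_u=x_u|X_S=x_S)\mathbb{P}(X_I=x_I|X_S=x_S)|$,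 probabilities under the marginal of the RBM. *)

(* Defs.v *)
From HB Require Import structures.
From mathcomp Require Import all_boot all_order all_algebra.
From mathcomp Require Import reals sequences exp.
Set Implicit Arguments. Unset Strict Implicit. Unset Printing Implicit Defensive.
Import Order.TTheory GRing.Theory Num.Theory.
Local Open Scope ring_scope.

Section RBM.
Variables (R : realType) (n m : nat).
Variables (J : 'M[R]_(n, m)) (h : 'I_n -> R) (g : 'I_m -> R).

Definition spin (b : bool) : R := if b then 1 else -1.

Definition obs := {ffun 'I_n -> bool}.
Definition lat := {ffun 'I_m -> bool}.

Definition joint_w (x : obs) (y : lat) : R :=
  expR (\sum_(i < n) \sum_(j < m) spin (x i) * J i j * spin (y j)
        + \sum_(i < n) h i * spin (x i) + \sum_(j < m) g j * spin (y j)).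

Definition marg_w (x : obs) : R := \sum_(y : lat) joint_w x y.

Definition probA (A : {set 'I_n}) (sigma : obs) : R :=
  (\sum_(x : obs | [forall i in A, x i == sigma i]) marg_w x)
  / (\sum_(x : obs) marg_w x).

Definition condP (A S : {set 'I_n}) (sigma : obs) : R :=
  probA (A :|: S) sigma / probA S sigma.

(* nu_{u,I|S}(x_u, x_I | x_S), all assignments read off sigma *)
Definition nu (u : 'I_n) (I S : {set 'I_n}) (sigma : obs) : R :=
  `| condP (u |: I) S sigma - condP [set u] S sigma * condP I S sigma |.

Definition rho (t : R) : R := ln (expR t + expR (- t)).

Definition rbm_f (x : obs) : R :=
  \sum_(j < m) rho (\sum_(i < n) J i j * spin (x i) + g j)
  + \sum_(i < n) h i * spin (x i).

Definition fhat (T : {set 'I_n}) : R :=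
  (2 ^+ n)^-1 * \sum_(x : obs) rbm_f x * \prod_(i in T) spin (x i).

Definition mrf_nbr (u : 'I_n) : {set 'I_n} :=
  [set i | (i != u) &&
     [exists T : {set 'I_n}, [&& u \in T, i \in T & fhat T != 0]]].

Definition rbm_s : nat :=
  \max_(u : 'I_n) #|[set j : 'I_m | [exists i in mrf_nbr u, J i j != 0%R]]|.

End RBM.

(* Main.v *)
Require Import Defs.
From HB Require Import structures.
From mathcomp Require Import all_boot all_order all_algebra.
From mathcomp Require Import reals sequences exp ring lra zify.
Set Implicit Arguments. Unset Strict Implicit. Unset Printing Implicit Defensive.
Import Order.TTheory GRing.Theory Num.Theory.
Local Open Scope ring_scope.

Lemma sum_gt0 (R : realType) (T : finType) (x0 : T) (F : T -> R) :
  (forall x, 0 < F x) -> 0 < \sum_x F x.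
Proof.
move=> H; rewrite (bigD1 x0) //=; apply: ltr_wpDr; last exact: H.
by apply: sumr_ge0 => x _; apply: ltW.
Qed.

Section Comb.
Variables (R : realType) (Y : finType) (n : nat) (q : 'I_n -> Y -> R).
Hypothesis q01 : forall i y, 0 <= q i y <= 1.

Definition Lw (w : Y -> R) (T : {set 'I_n}) := \sum_y w y * \prod_(i in T) q i y.

Lemma Lw0 w T : (forall y, w y = 0) -> Lw w T = 0.
Proof. by move=> H; rewrite /Lw big1 // => y _; rewrite H mul0r. Qed.

Lemma comb (N k : nat) : forall (A : {set Y}) (w : Y -> R) (I : {set 'I_n}) (M : R),
  (#|A| <= k)%N -> (#|I| <= N)%N -> 0 <= M ->
  (forall y, w y != 0 -> exists2 y', y' \in A & forall i, i \in I -> q i y = q i y') ->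
  (forall T : {set 'I_n}, T \subset I -> (#|T| < k)%N -> `|Lw w T| <= M) ->
  `|Lw w I| <= ((2 * N + 1)%:R) ^+ k * M.
Proof.
have C1 : forall k, 1 <= ((2 * N + 1)%:R : R) ^+ k.
  by move=> j; apply: exprn_ege1; rewrite ler1n addn1.
elim: k => [|k IHk] A w I M hA hI hM hrep hT.
  have A0 : A = set0 by apply/eqP; rewrite -cards_eq0 -leqn0.
  rewrite Lw0 ?normr0 ?expr0 ?mul1r // => y; apply/eqP/negPn/negP => /hrep [y'].
  by rewrite A0 inE.
have [A0|[y0 y0A]] := set_0Vmem A.
  rewrite Lw0 ?normr0; first by rewrite mulr_ge0 // (le_trans ler01 (C1 _)).
  by move=> y; apply/eqP/negPn/negP => /hrep [y']; rewrite A0 inE.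
set C := ((2 * N + 1)%:R : R) ^+ k.
suff inner : forall t (I : {set 'I_n}), (#|I| <= t)%N -> (#|I| <= N)%N ->
  (forall y, w y != 0 -> exists2 y', y' \in A & forall i, i \in I -> q i y = q i y') ->
  (forall T : {set 'I_n}, T \subset I -> (#|T| < k.+1)%N -> `|Lw w T| <= M) ->
  `|Lw w I| <= 2 * C * M * #|I|%:R + M.
  apply: le_trans (inner _ I (leqnn _) hI hrep hT) _.
  rewrite exprS.
  have : 2 * C * M * #|I|%:R <= 2 * C * M * N%:R.
    by rewrite ler_wpM2l ?ler_nat // !mulr_ge0 // (le_trans ler01 (C1 _)).
  have : M <= C * M by rewrite ler_peMl // C1.
  rewrite -/C.
  have -> : ((2 * N + 1)%:R : R) = 2 * N%:R + 1 by rewrite natrD natrM.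
  move=> h1 h2. nra.
elim=> [|t IHt] I0 hI0 hIN hrep0 hT0.
  have h0 : (#|I0| < k.+1)%N by rewrite ltnS (leq_trans hI0).
  apply: le_trans (hT0 I0 (subxx _) h0) _.
  by rewrite lerDr !mulr_ge0 // (le_trans ler01 (C1 _)).
have [small|big] := ltnP #|I0| k.+1.
  apply: le_trans (hT0 I0 (subxx _) small) _.
  by rewrite lerDr !mulr_ge0 // (le_trans ler01 (C1 _)).
have [a aI] : exists a, a \in I0.
  by apply/set0Pn; rewrite -card_gt0 (leq_trans _ big).
set lam := q a y0.
set w' := fun y => w y * (q a y - lam).
have key : forall T : {set 'I_n}, a \notin T -> Lw w (a |: T) = Lw w' T + lam * Lw w T.
  move=> T aT; rewrite /Lw mulr_sumr -big_split /=; apply: eq_bigr => y _.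
  by rewrite big_setU1 //= /w'; ring.
have cardD : #|I0| = (#|I0 :\ a|).+1 by rewrite (cardsD1 a) aI.
have eI : I0 = a |: (I0 :\ a) by rewrite setD1K.
have aD : a \notin I0 :\ a by rewrite !inE eqxx.
have hw' : `|Lw w' (I0 :\ a)| <= C * (2 * M).
  apply: (IHk (A :\ y0)).
  - by move: hA; rewrite (cardsD1 y0) y0A.
  - by rewrite (leq_trans _ hIN) // cardD.
  - by rewrite mulr_ge0.
  - move=> y; rewrite /w' mulf_eq0 negb_or subr_eq0 => /andP [/hrep0 [y' y'A hy] ne].
    exists y'; last by move=> i /setD1P [_ iI]; exact: hy.
    rewrite !inE y'A andbT; apply: contraNneq ne => e.
    by rewrite /lam -e hy.
  - move=> T TI Tk.
    have aT : a \notin T by apply: contra aD => aT; apply: (subsetP TI).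
    have -> : Lw w' T = Lw w (a |: T) - lam * Lw w T by rewrite key // addrK.
    have h1 : `|Lw w (a |: T)| <= M.
      apply: hT0; first by rewrite subUset sub1set aI (subset_trans TI) // subD1set.
      by rewrite cardsU1 aT.
    have h2 : `|Lw w T| <= M.
      by apply: hT0; [rewrite (subset_trans TI) // subD1set | rewrite ltnS ltnW].
    have /andP [l0 l1] : 0 <= lam <= 1 by apply: q01.
    apply: le_trans (ler_normB _ _) _.
    rewrite normrM (ger0_norm l0).
    have : lam * `|Lw w T| <= M by rewrite (le_trans _ h2) // ler_piMl.
    lra.
have hI' : `|Lw w (I0 :\ a)| <= 2 * C * M * #|I0 :\ a|%:R + M.
  apply: IHt.
  - by rewrite -ltnS -cardD.
  - by rewrite (leq_trans _ hIN) // cardD.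
  - move=> y /hrep0 [y' y'A hy]; exists y' => // i /setD1P [_ iI]; exact: hy.
  - move=> T TI Tk; apply: hT0 => //; by rewrite (subset_trans TI) // subD1set.
rewrite eI key // cardsU1 aD /= natrD.
have /andP [l0 l1] : 0 <= lam <= 1 by apply: q01.
apply: le_trans (ler_normD _ _) _.
rewrite normrM (ger0_norm l0).
have : lam * `|Lw w (I0 :\ a)| <= `|Lw w (I0 :\ a)| by rewrite ler_piMl.
lra.
Qed.
End Comb.

Section Main.
Variables (R : realType) (n m : nat) (J : 'M[R]_(n, m)) (h : 'I_n -> R) (g : 'I_m -> R).
Variable sigma : {ffun 'I_n -> bool}.

Definition theta (i : 'I_n) (y : lat m) : R := \sum_(j < m) J i j * spin R (y j) + h i.
Definition cc i y := expR (theta i y) + expR (- theta i y).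
Definition pp i y := expR (spin R (sigma i) * theta i y) / cc i y.
Definition GG (y : lat m) : R := expR (\sum_(j < m) g j * spin R (y j)).
Definition DD y := GG y * \prod_(i < n) cc i y.
Definition WW (B : {set 'I_n}) :=
  \sum_(x : obs n | [forall i in B, x i == sigma i]) marg_w J h g x.

Lemma cc_gt0 i y : 0 < cc i y.
Proof. by rewrite addr_gt0 // expR_gt0. Qed.

Lemma pp01 i y : 0 < pp i y <= 1.
Proof.
rewrite divr_gt0 ?expR_gt0 ?cc_gt0 //= ler_pdivrMr ?cc_gt0 // mul1r /cc.
by case: (sigma i) => /=; rewrite ?mul1r ?mulN1r ?lerDl ?lerDr ltW // expR_gt0.
Qed.

Lemma DD_gt0 y : 0 < DD y.
Proof. by rewrite mulr_gt0 ?expR_gt0 // prodr_gt0 // => i _; apply: cc_gt0. Qed.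

Lemma spin2 b : spin R b * spin R b = 1 :> R.
Proof. by case: b => /=; rewrite ?mulr1 ?mulrNN ?mulr1. Qed.

Lemma joint_eq x y : joint_w J h g x y =
  GG y * \prod_(i < n) expR (spin R (x i) * theta i y).
Proof.
rewrite /joint_w /GG -expR_sum -expRD addrC; congr expR; congr (_ + _).
rewrite -big_split /=; apply: eq_bigr => i _.
by rewrite /theta mulrDr mulr_sumr; congr (_ + _); [apply: eq_bigr => j _; ring | ring].
Qed.

Lemma WW_eq B : WW B = \sum_(y : lat m) DD y * \prod_(i in B) pp i y.
Proof.
rewrite /WW /marg_w exchange_big /=; apply: eq_bigr => y _.
under eq_bigr do rewrite joint_eq.
rewrite -mulr_sumr /DD -mulrA; congr (_ * _).
pose F := fun (i : 'I_n) (b : bool) =>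
  if (i \in B) && (b != sigma i) then 0 else expR (spin R b * theta i y).
transitivity (\sum_(x : obs n) \prod_(i < n) F i (x i)).
  rewrite big_mkcond /=; apply: eq_bigr => x _.
  case: forallP => [Hx | Hx].
    apply: eq_bigr => i _; rewrite /F; case: ifP => // /andP [iB ne].
    by move: (Hx i); rewrite iB /= (negbTE ne).
  have [i] : exists i, ~~ ((i \in B) ==> (x i == sigma i)).
    by apply/existsP; rewrite -negb_forall; apply/negP => /forallP H; apply: Hx => i; apply: H.
  rewrite negb_imply => /andP [iB xi].
  by rewrite (bigD1 i) //= /F iB xi mul0r.
rewrite -(bigA_distr_bigA) /=.
transitivity (\prod_(i < n) (cc i y * (if i \in B then pp i y else 1))).
  apply: eq_bigr => i _; rewrite big_bool /F /pp /cc.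
  have := cc_gt0 i y; rewrite /cc => hc.
  case: (i \in B) => /=.
    case: (sigma i) => /=; rewrite ?eqxx /= ?mul1r ?mulN1r ?add0r ?addr0; by rewrite mulrC divfK // gt_eqF.
  by rewrite mulr1 mul1r mulN1r.
by rewrite big_split /= [X in _ = _ * X]big_mkcond.
Qed.

Definition ZZ := \sum_(x : obs n) marg_w J h g x.

Lemma ZZ_gt0 : 0 < ZZ.
Proof.
apply: (sum_gt0 [ffun => false]) => x.
by apply: (sum_gt0 [ffun => false]) => y; apply: expR_gt0.
Qed.

Lemma WW_gt0 B : 0 < WW B.
Proof.
rewrite WW_eq; apply: (sum_gt0 [ffun => false]) => y.
rewrite mulr_gt0 ?DD_gt0 // prodr_gt0 // => i _.
by case/andP: (pp01 i y).
Qed.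

Lemma condP_eq A S : condP J h g A S sigma = WW (A :|: S) / WW S.
Proof.
rewrite /condP /probA -/(WW _) -/(WW _) -/ZZ invf_div mulrA divfK //.
exact: lt0r_neq0 ZZ_gt0.
Qed.

Variables (u : 'I_n) (S : {set 'I_n}).
Definition dS y := DD y * \prod_(i in S) pp i y.
Definition ZS := \sum_y dS y.
Definition Eu := \sum_y dS y * pp u y.
Definition ww y := dS y * pp u y / ZS - Eu / (ZS * ZS) * dS y.

Lemma WW_disj (A : {set 'I_n}) : [disjoint A & S] ->
  WW (A :|: S) = \sum_y dS y * \prod_(i in A) pp i y.
Proof.
move=> dAS; rewrite WW_eq; apply: eq_bigr => y _.
rewrite (eq_bigl [predU A & S]); last by move=> i; rewrite !inE.
by rewrite bigU //= /dS; ring.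
Qed.

Lemma nu_eq (T : {set 'I_n}) : u \notin T -> u \notin S -> [disjoint T & S] ->
  nu J h g u T S sigma = `| Lw pp ww T |.
Proof.
move=> uT uS dTS.
have dUS : [disjoint u |: T & S].
  by rewrite disjoints_subset subUset sub1set in_setC uS -disjoints_subset dTS.
have d1S : [disjoint [set u] & S] by rewrite disjoints1.
rewrite /nu !condP_eq -/(WW S) !WW_disj //.
have -> : WW S = ZS.
  rewrite -(set0U S) WW_disj; last by rewrite disjoints_subset sub0set.
  rewrite /ZS; apply: eq_bigr => y _.
  by rewrite big_set0 mulr1.
under eq_bigr do rewrite big_setU1 //=.
have -> : \sum_y dS y * \prod_(i in [set u]) pp i y = Eu.
  by apply: eq_bigr => y _; rewrite big_set1.
congr (`| _ |).
rewrite /Lw /ww.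
rewrite [RHS](eq_bigr (fun y => dS y * (pp u y * \prod_(i in T) pp i y) / ZS
   - Eu / (ZS * ZS) * (dS y * \prod_(i in T) pp i y))); last by move=> y _; ring.
rewrite sumrB -mulr_suml -mulr_sumr invfM; ring.
Qed.
End Main.
Lemma natineq (a K : nat) : (0 < a)%N -> (0 < K)%N -> ((2 * a + 1) ^ K < 4 ^ K * a ^ (K * (K + 1)))%N.
Proof.
move=> a0 K0.
apply: (@leq_ltn_trans ((3 * a) ^ K)); first by rewrite leq_exp2r //; lia.
apply: (@leq_trans ((4 * a) ^ K)); first by rewrite ltn_exp2r //; lia.
rewrite expnMn leq_mul2l leq_pexp2l ?orbT //. nia.
Qed.


Unset Implicit Arguments.
Set Strict Implicit.
Theorem lemma3 (R : realType) (n m : nat) (J : 'M[R]_(n, m))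
  (h : 'I_n -> R) (g : 'I_m -> R)
  (u : 'I_n) (I S : {set 'I_n}) (sigma : {ffun 'I_n -> bool}) :
  u \notin I -> u \notin S -> [disjoint I & S] ->
  I != set0 -> I \subset mrf_nbr J h g u ->
  let s := rbm_s J h g in
  exists I' : {set 'I_n},
    [/\ I' \subset I, (#|I'| <= 2 ^ s)%N &
      nu J h g u I' S sigma >=
        ((4 ^ (2 ^ s))%:R)^-1 * ((#|I|%:R)^-1) ^+ (2 ^ s * (2 ^ s + 1))
        * nu J h g u I S sigma].
Proof.
move=> uI uS dIS I0 Inbr s.
set N := [set j : 'I_m | [exists i in mrf_nbr J h g u, J i j != 0]].
have hN : (#|N| <= s)%N.
  by rewrite /s /rbm_s (bigD1 u) //= leq_maxl.
set K := (2 ^ s)%N.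
set c := ((4 ^ K)%:R)^-1 * ((#|I|%:R)^-1) ^+ (K * (K + 1)) : R.
have key : forall T : {set 'I_n}, T \subset I ->
    nu J h g u T S sigma = `|Lw (pp J h sigma) (ww J h g sigma u S) T|.
  move=> T TI; apply: nu_eq => //; last exact: disjointWl TI dIS.
  by apply: contra uI => uT; apply: (subsetP TI).
case: (boolP [exists T : {set 'I_n}, [&& T \subset I, (#|T| <= K)%N &
           c * nu J h g u I S sigma <= nu J h g u T S sigma]]).
  by move/existsP => [T /and3P [a b e]]; exists T; split.
move/existsPn => H; exfalso.
have hlt : forall T : {set 'I_n}, T \subset I -> (#|T| <= K)%N ->
    nu J h g u T S sigma < c * nu J h g u I S sigma.
  by move=> T TI TK; move: (H T); rewrite TI TK /= ltNge.
have nI0 : (0 < #|I|)%N by rewrite card_gt0.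
have K0 : (0 < K)%N by rewrite expn_gt0.
have c0 : 0 < c.
  by rewrite mulr_gt0 // ?invr_gt0 ?exprn_gt0 ?invr_gt0 ?ltr0n ?expn_gt0.
have nuI0 : 0 < nu J h g u I S sigma.
  have := hlt set0 (sub0set _) ltac:(by rewrite cards0).
  rewrite /nu => /(le_lt_trans (normr_ge0 _)).
  by rewrite pmulr_rgt0.
set Aset := [set y : lat m | y \in pffun_on false N predT].
have hA : (#|Aset| <= K)%N.
  rewrite cardsE card_pffun_on.
  apply: (@leq_trans (2 ^ #|N|)); first by rewrite -card_bool.
  by rewrite /K leq_pexp2l.
have q01 : forall i y, 0 <= pp J h sigma i y <= 1.
  by move=> i y; case/andP: (pp01 J h sigma i y) => /ltW -> ->.
have := @comb _ _ _ _ q01 #|I| K Aset (ww J h g sigma u S)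
  I (c * nu J h g u I S sigma) hA (leqnn _) (ltW (mulr_gt0 c0 nuI0)).
rewrite -key // => hfin.
have : nu J h g u I S sigma <=
    (2 * #|I| + 1)%:R ^+ K * (c * nu J h g u I S sigma).
  apply: hfin.
  - move=> y _; exists [ffun j => (j \in N) && y j].
      rewrite inE; apply/pffun_onP; split=> //.
      apply/subsetP => j; rewrite inE ffunE; by case: (j \in N).
    move=> i iI.
    have eth : theta J h i [ffun j => (j \in N) && y j] = theta J h i y.
      rewrite /theta; congr (_ + _); apply: eq_bigr => j _.
      rewrite ffunE; case jN: (j \in N) => //=.
      have -> : J i j = 0.
        apply/eqP; apply: contraFT jN => Jij.
        by rewrite inE; apply/existsP; exists i; rewrite (subsetP Inbr i iI) Jij.
      by rewrite !mul0r.
    by rewrite /pp /cc eth.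
  - move=> T TI TK; rewrite -key //; apply: ltW; apply: hlt => //; exact: ltnW.
rewrite mulrA => hh.
have : (2 * #|I| + 1)%:R ^+ K * c < 1 :> R.
  rewrite /c mulrA -natrX exprVn -mulrA -invfM -natrX -natrM.
  rewrite ltr_pdivrMr ?ltr0n ?muln_gt0 ?expn_gt0 ?nI0 // mul1r ltr_nat.
  exact: natineq.
move=> hlt1.
have h2 : (2 * #|I| + 1)%:R ^+ K * c * nu J h g u I S sigma < nu J h g u I S sigma.
  by rewrite gtr_pMl.
by have := lt_le_trans h2 hh; rewrite ltxx.
Qed.
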